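(* Let $G^{\mathcal X}_r=(V_r,E^{\mathcal X}_r,s_r)$ be an extraction order and $l\in V_r$. Then $\mathcal L_e=\mathcal L_{e'}$ for every pair of incoming edges $e,e'\in E^{\mathcal X}_r$ of $l$.
   Context: An extraction order of a directed graph $G_r=(V_r,E_r)$ is a rooted directed acyclic graph $G^{\mathcal X}_r=(V_r,E^{\mathcal X}_r,s_r)$ in which every node is reachable from $s_r$ and $E^{\mathcal X}_r$ is obtained from $E_r$ by reversing some (possibly no) edges. A confluence from $i$ to $j$ is a pair of directed paths in $E^{\mathcal X}_r$ from $i$ to $j$ sharing no node other than $i$ and $j$. For $e\in E^{\mathcal X}_r$, the label set $\mathcal L_e\subseteq V_r$ is the set of nodes $j$ such that $e$ belongs to some confluence with target $j$. *)

(* Defs.v *)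
From mathcomp Require Import all_boot.
Set Implicit Arguments. Unset Strict Implicit. Unset Printing Implicit Defensive.

Section ExtractionOrder.
Variables (V : finType) (Er : {set V * V}) (flip : V * V -> bool).
(* G_r = (V, Er) is a directed graph; an edge (u,v) \in Er goes from u to v.
   The extraction order G^X has the same edges, where the edges e with
   [flip e = true] are reversed. *)

Definition xsrc (e : V * V) : V := if flip e then e.2 else e.1.
Definition xtgt (e : V * V) : V := if flip e then e.1 else e.2.

Fixpoint xwalk (x y : V) (p : seq (V * V)) : bool :=
  match p with
  | [::] => x == y
  | e :: p' => [&& e \in Er, xsrc e == x & xwalk (xtgt e) y p']
  end.

Definition xnodes (x : V) (p : seq (V * V)) : seq V := x :: map xtgt p.

Definition xpath (x y : V) (p : seq (V * V)) : bool :=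
  xwalk x y p && uniq (xnodes x p).

Definition extraction_order (s : V) : Prop :=
  (forall v p, xwalk v v p -> p = [::]) /\
  (forall v, exists p, xwalk s v p).

Definition confluence (i j : V) (p q : seq (V * V)) : Prop :=
  [/\ xpath i j p, xpath i j q, p != q &
      forall v, v \in xnodes i p -> v \in xnodes i q -> v = i \/ v = j].

Definition in_label (e : V * V) (j : V) : Prop :=
  exists i p q, confluence i j p q /\ (e \in p \/ e \in q).

End ExtractionOrder.

(* Main.v *)
Require Import Defs.
From mathcomp Require Import all_boot.
From Stdlib Require Import Classical.
Set Implicit Arguments. Unset Strict Implicit.

Lemma xwalk_cat {V : finType} {Er : {set V * V}} {flip} x m y p q :
  xwalk Er flip x m p -> xwalk Er flip m y q -> xwalk Er flip x y (p ++ q).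
Proof.
elim: p x => [|e p IH] x /=; first by move/eqP->.
by case/and3P=> -> -> /IH H /H ->.
Qed.

Lemma xwalk_catE {V : finType} {Er : {set V * V}} {flip} x y p q :
  xwalk Er flip x y (p ++ q) -> exists m, xwalk Er flip x m p /\ xwalk Er flip m y q.
Proof.
elim: p x => [|e p IH] x /=; first by move=> H; exists x; rewrite eqxx.
case/and3P=> H1 H2 /IH [m [Hm1 Hm2]]; exists m; by rewrite H1 H2 Hm1.
Qed.

Lemma xwalk_end {V : finType} {Er : {set V * V}} {flip} x y p :
  xwalk Er flip x y p -> y \in xnodes flip x p.
Proof.
elim: p x => [|e p IH] x /=; first by move/eqP->; rewrite mem_seq1.
by case/and3P=> _ _ /IH; rewrite !inE => ->; rewrite orbT.
Qed.

Lemma xnodes_pre {V : finType} {flip : V * V -> bool} x v p q :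
  v \in xnodes flip x p -> v \in xnodes flip x (p ++ q).
Proof. by rewrite /xnodes map_cat -cat_cons mem_cat => ->. Qed.

Lemma xnodes_suf {V : finType} {Er : {set V * V}} {flip} x m v p q :
  xwalk Er flip x m p -> v \in xnodes flip m q -> v \in xnodes flip x (p ++ q).
Proof.
move=> /xwalk_end Hm; rewrite /xnodes map_cat -cat_cons mem_cat inE.
by case/orP=> [/eqP->|->]; rewrite ?Hm ?orbT.
Qed.

Lemma xnodes_catE {V : finType} {Er : {set V * V}} {flip} x m v p q :
  xwalk Er flip x m p -> v \in xnodes flip x (p ++ q) ->
  v \in xnodes flip x p \/ v \in xnodes flip m q.
Proof.
move=> _; rewrite /xnodes map_cat -cat_cons mem_cat.
by case/orP=> H; [left|right; rewrite inE H orbT].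
Qed.

Lemma split_node {V : finType} {Er : {set V * V}} {flip} x y v p :
  xwalk Er flip x y p -> v \in xnodes flip x p ->
  exists p1 p2, [/\ p = p1 ++ p2, xwalk Er flip x v p1 & xwalk Er flip v y p2].
Proof.
elim: p x => [|e p IH] x /=.
  by move=> Hw; rewrite mem_seq1 => /eqP->; exists [::], [::]; rewrite /= eqxx.
case/and3P=> H1 H2 H3; rewrite inE; case/orP=> [/eqP->|Hv].
  by exists [::], (e :: p); rewrite /= eqxx H1 H2 H3.
have [p1 [p2 [-> W1 W2]]] := IH _ H3 Hv.
by exists (e :: p1), p2; rewrite /= H1 H2 W1.
Qed.

Lemma split_edge {V : finType} {Er : {set V * V}} {flip} x y e p :
  xwalk Er flip x y p -> e \in p ->
  exists p1 p2, [/\ p = p1 ++ e :: p2, xwalk Er flip x (xsrc flip e) p1, e \in Er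
     & xwalk Er flip (xtgt flip e) y p2].
Proof.
move=> Hw He; case/splitPr: He Hw => p1 p2 Hw.
have [m [W1 /= /and3P [H1 /eqP H2 H3]]] := xwalk_catE Hw.
by exists p1, p2; rewrite H2.
Qed.

Lemma dag_cyc {V : finType} {Er : {set V * V}} {flip} (acyc : forall v p, xwalk Er flip v v p -> p = [::])
  a b r t : xwalk Er flip a b r -> r != [::] -> xwalk Er flip b a t -> False.
Proof.
move=> W1 Hr W2; have := acyc _ _ (xwalk_cat W1 W2).
by case: r Hr {W1}.
Qed.

Lemma dag_uniq {V : finType} {Er : {set V * V}} {flip} (acyc : forall v p, xwalk Er flip v v p -> p = [::])
  x y p : xwalk Er flip x y p -> uniq (xnodes flip x p).
Proof.
elim: p x => [|e p IH] x //=.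
case/and3P=> H1 /eqP H2 H3; have U := IH _ H3; rewrite /xnodes /= in U *.
rewrite U andbT.
apply/negP=> Hx; have [p1 [p2 [_ W1 _]]] := split_node H3 Hx.
apply: (dag_cyc acyc (r := [:: e]) (a := x) (b := xtgt flip e)) W1 => //=.
by rewrite H1 H2 !eqxx.
Qed.

Lemma lastW {V : finType} {Er : {set V * V}} {flip} (W : V -> Prop) b R a :
  xwalk Er flip a b R -> (exists2 v, v \in xnodes flip a R & W v) ->
  exists x r, [/\ W x, xwalk Er flip x b r & forall v, v \in map (xtgt flip) r -> ~ W v].
Proof.
elim: R a => [|e R IH] a /=.
  move=> /eqP-> [v]; rewrite mem_seq1 => /eqP-> Hv. exists b, [::]. by split; rewrite /= ?eqxx.
case/and3P=> H1 /eqP H2 H3 Hex.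
case: (classic (exists2 v, v \in xnodes flip (xtgt flip e) R & W v)) => [Hc|Hc].
  exact: IH H3 Hc.
exists a, (e :: R); split.
- case: Hex => v; rewrite inE; case/orP=> [/eqP->//|Hv Wv]; case: Hc; by exists v.
- by rewrite /= H1 H2 eqxx.
- by move=> v Hv Wv; apply: Hc; exists v.
Qed.
Lemma main {V : finType} {Er : {set V * V}} {flip} s
  (HX : extraction_order Er flip s) e e' i j p q :
  confluence Er flip i j p q -> e \in p -> e' \in Er ->
  xtgt flip e' = xtgt flip e -> in_label Er flip e' j.
Proof.
case: HX => acyc reach.
move=> Hc He He' Hl.
case: (boolP ((e' \in p) || (e' \in q))) => [Hin|Hn].
  by exists i, p, q; split => //; apply/orP.
move: Hn; rewrite negb_or => /andP [Hnp Hnq].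
case: Hc => /andP [wp _] /andP [wq _] Hneq Hdisj.
set l := xtgt flip e in Hl.
have [p1 [p2 [Ep wp1 HeE wp2]]] := split_edge wp He.
set u := xsrc flip e in wp1.
set u' := xsrc flip e'.
have we' : xwalk Er flip u' l [:: e'] by rewrite /= He' Hl !eqxx.
have we : xwalk Er flip u l [:: e] by rewrite /= HeE !eqxx.
have mkpath : forall a b r, xwalk Er flip a b r -> xpath Er flip a b r.
  by move=> a b r H; rewrite /xpath H (dag_uniq acyc H).
have Hp2p : forall v, v \in xnodes flip l p2 -> v \in xnodes flip i p.
  move=> v Hv; rewrite Ep -cat1s catA; exact: xnodes_suf (xwalk_cat wp1 we) Hv.
have F1 : forall v, v \in xnodes flip l p2 -> forall t, xwalk Er flip v i t -> False.
  move=> v Hv t Ht; have [a [b [_ Wa _]]] := split_node wp2 Hv.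
  exact: (dag_cyc acyc we isT (xwalk_cat Wa (xwalk_cat Ht wp1))).
have Fi : i \notin xnodes flip l p2.
  by apply/negP => Hv; exact: (F1 _ Hv [::] (eqxx i)).
pose W v := v \in xnodes flip i q \/ v \in xnodes flip i p1 \/ exists t, xwalk Er flip v i t.
have [R wR] := reach u'.
have [x [r2 [Wx wr2 Hr2]]] : exists x r, [/\ W x, xwalk Er flip x u' r
      & forall v, v \in map (xtgt flip) r -> ~ W v].
  apply: lastW wR _; exists s; first by rewrite inE eqxx.
  by right; right; apply: reach.
have G : forall v, v \in xnodes flip x r2 -> v \notin xnodes flip l p2.
  move=> v Hv; apply/negP => Hv2.
  have [a [b [_ _ Wb]]] := split_node wr2 Hv.
  have [c [d [_ Wc _]]] := split_node wp2 Hv2.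
  by apply: (dag_cyc acyc (xwalk_cat Wb we')) Wc; case: b {Wb}.
pose P' := r2 ++ e' :: p2.
have wP' : xwalk Er flip x j P' by apply: xwalk_cat wr2 _; rewrite /= He' Hl !eqxx.
have eP' : e' \in P' by rewrite mem_cat inE eqxx orbT.
have nP' : forall v, v \in xnodes flip x P' -> v \in xnodes flip x r2 \/ v \in xnodes flip l p2.
  move=> v Hv; case: (xnodes_catE wr2 Hv) => [->|]; first by left.
  rewrite /xnodes /= inE Hl; case/orP => [/eqP->|H]; last by right.
  by left; apply: xwalk_end wr2.
have nr2 : forall v, v \in xnodes flip x r2 -> v = x \/ ~ W v.
  move=> v; rewrite inE; case/orP => [/eqP->|/Hr2]; by [left|right].
have [Hxq|Hxq] := boolP (x \in xnodes flip i q).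
  have [q1 [q2 [Eq wq1 wq2]]] := split_node wq Hxq.
  exists x, P', q2; split; last by left.
  split; [exact: mkpath wP' | exact: mkpath wq2 | |].
    by apply/eqP => E; move: Hnq; rewrite Eq mem_cat -E eP' orbT.
  move=> v Hv1 Hv2.
  have Hvq : v \in xnodes flip i q by rewrite Eq; apply: xnodes_suf Hv2; exact: wq1.
  case: (nP' _ Hv1) => [/nr2 [->|NW]|Hv]; first by left.
    by case: NW; left.
  case: (Hdisj v (Hp2p _ Hv) Hvq) => [Ei|->]; last by right.
  by move: Fi; rewrite -Ei Hv.
case: Wx => [Hxq'|[Hxp1|[t wt]]]; first by rewrite Hxq' in Hxq.
  have [a [b [Ep1 wa _]]] := split_node wp1 Hxp1.
  exists i, (a ++ P'), q; split; last by left; rewrite mem_cat eP' orbT.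
  split; [exact: mkpath (xwalk_cat wa wP') | exact: mkpath wq | |].
    by apply/eqP => E; move: Hnq; rewrite -E mem_cat eP' orbT.
  move=> v Hv1 Hv2.
  case: (xnodes_catE wa Hv1) => [Hva|HvP].
    apply: Hdisj Hv2; rewrite Ep Ep1 -catA; exact: xnodes_pre.
  case: (nP' _ HvP) => [/nr2 [Ex|NW]|Hv].
  - by move: Hxq; rewrite -Ex Hv2.
  - by case: NW; left.
  - exact: Hdisj (Hp2p _ Hv) Hv2.
have wl : l \in xnodes flip l p2 by rewrite inE eqxx.
exists x, P', (t ++ q); split; last by left.
split; [exact: mkpath wP' | exact: mkpath (xwalk_cat wt wq) | |].
  apply/eqP => E; move: eP'; rewrite E mem_cat (negbTE Hnq) orbF => Het.
  have [a [b [_ _ _ wb]]] := split_edge wt Het.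
  by rewrite Hl in wb; apply: (F1 _ wl _ wb).
move=> v Hv1 Hv2.
case: (nP' _ Hv1) => [/nr2 [->|NW]|Hv]; first by left.
  case: NW; case: (xnodes_catE wt Hv2) => [Hvt|Hvq]; last by left.
  have [a [b [_ _ wb]]] := split_node wt Hvt.
  by right; right; exists b.
case: (xnodes_catE wt Hv2) => [Hvt|Hvq].
  have [a [b [_ _ wb]]] := split_node wt Hvt.
  by case: (F1 _ Hv _ wb).
case: (Hdisj v (Hp2p _ Hv) Hvq) => [Ei|->]; last by right.
by move: Fi; rewrite -Ei Hv.
Qed.

Lemma conf_sym {V : finType} {Er : {set V * V}} {flip} i j p q :
  confluence Er flip i j p q -> confluence Er flip i j q p.
Proof.
case=> H1 H2 H3 H4; split => //; first by rewrite eq_sym.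
by move=> v A B; exact: H4.
Qed.

Lemma one_dir {V : finType} {Er : {set V * V}} {flip} s
  (HX : extraction_order Er flip s) e e' j :
  e' \in Er -> xtgt flip e' = xtgt flip e ->
  in_label Er flip e j -> in_label Er flip e' j.
Proof.
move=> He' Hl [i [p [q [Hc [Hp|Hq]]]]].
  exact: (main HX Hc Hp He' Hl).
exact: (main HX (conf_sym Hc) Hq He' Hl).
Qed.

Theorem lemma15 (V : finType) (Er : {set V * V}) (flip : V * V -> bool)
    (s : V) (HX : extraction_order Er flip s) (l : V) (e e' : V * V) :
  e \in Er -> e' \in Er -> xtgt flip e = l -> xtgt flip e' = l ->
  forall j : V, in_label Er flip e j <-> in_label Er flip e' j.
Proof.
move=> He He' Hl Hl' j; split.
  by apply: (one_dir HX He'); rewrite Hl Hl'.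
by apply: (one_dir HX He); rewrite Hl Hl'.
Qed.
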